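(* Let $\kappa$ be a regular uncountable cardinal with $\kappa^{<\kappa}=\kappa$ and $\gamma^\omega<\kappa$ for all $\gamma<\kappa$, and suppose $\kappa=\lambda^+$. Then the linear order $I^0$ is $(<\kappa,bs)$-stable.
   Context: Order $\kappa\times\mathbb Q$ lexicographically; $I^0$ is the set of $f:\omega\to\kappa\times\mathbb Q$, $f(n)=(f_1(n),f_2(n))$, with $\{n<\omega\mid f_1(n)\ne0\}$ finite, ordered by $f<g$ iff $f(n)<g(n)$ for the least $n$ with $f(n)\ne g(n)$. For a linear order $A$, $B\subseteq A$ and $a\in A$, $tp_{bs}(a,B,A)$ is the set of atomic and negated atomic formulas (in the language $\{<\}$) with parameters from $B$ satisfied by $a$. $A$ is $(<\kappa,bs)$-stable if for every $B\subseteq A$ with $|B|<\kappa$, $|\{tp_{bs}(a,B,A)\mid a\in A\}|<\kappa$. *)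

(* Defs.v *)
From mathcomp Require Import all_boot all_order all_algebra.
Import Order.TTheory GRing.Theory Num.Theory.
Set Implicit Arguments.
Unset Strict Implicit.

Definition card_le (X Y : Type) : Prop :=
  exists f : X -> Y, forall x y, f x = f y -> x = y.
Definition card_lt (X Y : Type) : Prop := card_le X Y /\ ~ card_le Y X.

(** The cardinal kappa is represented by a type [K] carrying a strict well-order
    [ltK] (an ordinal), with least element [z] (the ordinal 0). *)
Definition strict_wellorder (K : Type) (ltK : K -> K -> Prop) : Prop :=
  well_founded ltK /\
  (forall x y w, ltK x y -> ltK y w -> ltK x w) /\
  (forall x y, ltK x y \/ x = y \/ ltK y x).

Definition seg (K : Type) (ltK : K -> K -> Prop) (a : K) : Type :=
  {b : K | ltK b a}.

(** [K] is an initial ordinal (a cardinal): every proper initial segment has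
    strictly smaller cardinality. *)
Definition initial_ordinal (K : Type) (ltK : K -> K -> Prop) : Prop :=
  forall a : K, card_lt (seg ltK a) K.

Definition regular (K : Type) (ltK : K -> K -> Prop) : Prop :=
  forall S : K -> Prop, (forall a, exists b, S b /\ ~ ltK b a) ->
    card_le K {b : K | S b}.

Definition uncountable (K : Type) : Prop := ~ card_le K nat.

(** kappa^{<kappa} = kappa : kappa^gamma <= kappa for every gamma < kappa *)
Definition small_powers (K : Type) (ltK : K -> K -> Prop) : Prop :=
  forall a : K, card_le (seg ltK a -> K) K.

Definition omega_powers_small (K : Type) (ltK : K -> K -> Prop) : Prop :=
  forall a : K, card_lt (nat -> seg ltK a) K.

(** kappa = lambda^+ : there is lambda = |a| < kappa such that every cardinal
    below kappa is at most lambda. *)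
Definition successor_cardinal (K : Type) (ltK : K -> K -> Prop) : Prop :=
  exists a : K, forall b : K, card_le (seg ltK b) (seg ltK a).

(** * Atomic / negated atomic formulas in the language {<} with one free
      variable and parameters from A. *)
Inductive bterm (A : Type) : Type := BVar | BPar (b : A).
Arguments BVar {A}.
Arguments BPar {A} b.
Inductive batom (A : Type) : Type :=
  | ALt (s t : bterm A) | AEq (s t : bterm A).
Arguments ALt {A} s t.
Arguments AEq {A} s t.
Inductive blit (A : Type) : Type := LPos (p : batom A) | LNeg (p : batom A).
Arguments LPos {A} p.
Arguments LNeg {A} p.

Definition term_in {A} (B : A -> Prop) (t : bterm A) : Prop :=
  match t with BVar => True | BPar b => B b end.
Definition atom_in {A} (B : A -> Prop) (p : batom A) : Prop :=
  match p with ALt s t | AEq s t => term_in B s /\ term_in B t end.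
Definition lit_in {A} (B : A -> Prop) (l : blit A) : Prop :=
  match l with LPos p | LNeg p => atom_in B p end.

Definition term_val {A} (a : A) (t : bterm A) : A :=
  match t with BVar => a | BPar b => b end.
Definition atom_sat {A} (ltA : A -> A -> Prop) (a : A) (p : batom A) : Prop :=
  match p with
  | ALt s t => ltA (term_val a s) (term_val a t)
  | AEq s t => term_val a s = term_val a t
  end.
Definition lit_sat {A} (ltA : A -> A -> Prop) (a : A) (l : blit A) : Prop :=
  match l with LPos p => atom_sat ltA a p | LNeg p => ~ atom_sat ltA a p end.

Definition tp_bs {A} (ltA : A -> A -> Prop) (a : A) (B : A -> Prop)
  : blit A -> Prop := fun l => lit_in B l /\ lit_sat ltA a l.

Definition bs_stable (K : Type) (A : Type) (ltA : A -> A -> Prop) : Prop :=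
  forall B : A -> Prop, card_lt {b : A | B b} K ->
    card_lt {P : blit A -> Prop | exists a : A, P = tp_bs ltA a B} K.

Definition ltKQ (K : Type) (ltK : K -> K -> Prop) (p q : K * rat) : Prop :=
  ltK p.1 q.1 \/ (p.1 = q.1 /\ (p.2 < q.2)%R).

Definition I0 (K : Type) (z : K) : Type :=
  {f : nat -> K * rat | exists N : nat, forall n, (N <= n)%N -> (f n).1 = z}.

Definition ltI0 (K : Type) (ltK : K -> K -> Prop) (z : K) (f g : I0 z) : Prop :=
  exists n : nat, (forall m, (m < n)%N -> sval f m = sval g m) /\
                  ltKQ ltK (sval f n) (sval g n).

(* Main.v *)
Require Import Defs.
From mathcomp Require Import all_boot all_order all_algebra.
From Stdlib Require Import Classical ClassicalEpsilon FunctionalExtensionality PropExtensionality ProofIrrelevance.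
Import Order.TTheory GRing.Theory Num.Theory.

Lemma sig_eq A (P : A -> Prop) (s t : {x | P x}) : proj1_sig s = proj1_sig t -> s = t.
Proof. case: s => x px; case: t => y py /= E; subst y; f_equal; apply: proof_irrelevance. Qed.

Lemma card_le_trans X Y Z : card_le X Y -> card_le Y Z -> card_le X Z.
Proof. move=> [f fi] [g gi]; exists (fun x => g (f x)) => x y E; exact: fi (gi _ _ E). Qed.

Lemma curry_inj Y : card_le (nat -> nat -> Y) (nat -> Y).
Proof.
exists (fun F k => let p := odflt (0,0)%N (unpickle k) in F p.1 p.2) => F G E.
apply: functional_extensionality => i; apply: functional_extensionality => j.
have := congr1 (fun h => h (pickle (i, j))) E; by rewrite /= pickleK.
Qed.

Lemma map_nat_inj X Y : card_le X Y -> card_le (nat -> X) (nat -> Y).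
Proof.
move=> [f fi]; exists (fun F k => f (F k)) => F G E.
apply: functional_extensionality => k; apply: fi; exact: (congr1 (fun h => h k) E).
Qed.

Lemma tp_eq A (lt : A -> A -> Prop) (B : A -> Prop) a a' :
 (forall b, B b -> (lt a b <-> lt a' b)) -> (forall b, B b -> (lt b a <-> lt b a')) ->
 (forall b, B b -> (a = b <-> a' = b)) -> (lt a a <-> lt a' a') ->
 tp_bs lt a B = tp_bs lt a' B.
Proof.
move=> H1 H2 H3 H4.
have H3' : forall b, B b -> (b = a <-> b = a').
  by move=> b /H3 [h1 h2]; split=> E; [symmetry; apply: h1 | symmetry; apply: h2].
apply: functional_extensionality => l; apply: propositional_extensionality.
rewrite /tp_bs; case: l => [p|p]; case: p => [s t|s t]; case: s => [|b1]; case: t => [|b2] /=;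
 split; move=> [Hin Hs]; split=> //; move: Hin Hs => /= Hin; try tauto;
 try (have := H1 b2; tauto); try (have := H2 b1; tauto); try (have := H3 b2; tauto);
 try (have := H3' b1; tauto).
Qed.

Definition dec (P : Prop) : bool := if excluded_middle_informative P then true else false.
Lemma decP P : reflect P (dec P).
Proof. by rewrite /dec; case: excluded_middle_informative => h; constructor. Qed.

Section Ord.
Variables (K : Type) (ltK : K -> K -> Prop) (z : K).
Hypothesis Hwo : strict_wellorder ltK.
Hypothesis Hz : forall x : K, ~ ltK x z.
Hypothesis Hreg : regular ltK.
Hypothesis Hunc : uncountable K.

Lemma ltK_irr x : ~ ltK x x.
Proof.
case: Hwo => wf _; have: Acc ltK x := wf x.
elim=> y _ IH hy; exact: (IH y hy hy).
Qed.

Lemma ltK_trans x y w : ltK x y -> ltK y w -> ltK x w.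
Proof. case: Hwo => _ [h _]; exact: h. Qed.

Lemma ltK_tri x y : ltK x y \/ x = y \/ ltK y x.
Proof. case: Hwo => _ [_ h]; exact: h. Qed.

Lemma z_le x : x = z \/ ltK z x.
Proof. case: (ltK_tri x z) => [/Hz//|[->|]]; tauto. Qed.

Lemma bound_img X (f : X -> K) : ~ card_le K X -> exists r, forall x, ltK (f x) r.
Proof.
move=> HK; apply: NNPP => Hn; apply: HK.
have Hunb : forall a, exists b, (exists x, f x = b) /\ ~ ltK b a.
  move=> a; apply: NNPP => H; apply: Hn; exists a => x; apply: NNPP => H2; apply: H.
  by exists (f x); split; [exists x|].
case: (Hreg _ Hunb) => g ginj.
pose h (s : {b | exists x, f x = b}) : X :=
  proj1_sig (constructive_indefinite_description _ (proj2_sig s)).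
have hs : forall s, f (h s) = proj1_sig s :=
  fun s => proj2_sig (constructive_indefinite_description _ (proj2_sig s)).
exists (fun k => h (g k)) => x y E; apply: ginj; apply: sig_eq.
by rewrite -hs E hs.
Qed.

Lemma nomax x : exists y, ltK x y.
Proof.
apply: NNPP => Hn; apply: Hunc.
have Hunb : forall a, exists b, b = x /\ ~ ltK b a.
  by move=> a; exists x; split=> // h; apply: Hn; exists a.
case: (Hreg _ Hunb) => g ginj.
exists (fun _ => 0%N) => u v _; apply: ginj; apply: sig_eq.
by rewrite (proj2_sig (g u)) (proj2_sig (g v)).
Qed.

Lemma code_inj g d : ltK g d -> card_le (seg ltK g * nat) (nat -> seg ltK d).
Proof.
move=> Hgd.
pose emb (x : seg ltK g) : seg ltK d := exist _ (sval x) (ltK_trans _ _ _ (svalP x) Hgd).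
pose top : seg ltK d := exist _ g Hgd.
exists (fun p k => match k with 0 => emb p.1 | k.+1 => if k == p.2 then top else emb p.1 end).
move=> [x n] [y m] E.
have E0 := congr1 (fun h => h 0%N) E; have En := congr1 (fun h => h n.+1) E.
move: E0 En => /= /(congr1 (@proj1_sig _ _)) /= /sig_eq E0.
rewrite eqxx; case: eqP => [->|_]; first by rewrite E0.
move/(congr1 (@proj1_sig _ _)) => /= Eg; have := svalP y; rewrite -Eg => /ltK_irr.
by [].
Qed.

End Ord.
Arguments ltK_trans {K ltK} Hwo {x y w}.
Arguments ltK_irr {K ltK} Hwo {x}.
Arguments ltK_tri {K ltK} Hwo x y.

Definition ltf (K : Type) (ltK : K -> K -> Prop) (f g : nat -> K * rat) : Prop :=
  exists n : nat, (forall m, (m < n)%N -> f m = g m) /\ ltKQ ltK (f n) (g n).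

Arguments ltf {K}.

Section Red.
Variables (K : Type) (ltK : K -> K -> Prop) (z : K).
Hypothesis Hwo : strict_wellorder ltK.
Variable al : K.
Hypothesis Hzal : ltK z al.

Definition gb (a : nat -> K * rat) k := dec (ltK (a k).1 al).
Definition af (a : nat -> K * rat) m : K * rat :=
  if all (gb a) (iota 0 m.+1) then a m
  else if all (gb a) (iota 0 m) then (al, 0%R) else (z, 0%R).

Lemma af_supp (a : I0 z) : exists N, forall n, (N <= n)%N -> (af (sval a) n).1 = z.
Proof.
case: (svalP a) => N HN; exists N => n Hn; rewrite /af.
case: ifP => [_|H1]; first exact: HN.
case: ifP => [H2|//]; move: H1; rewrite -addn1 iotaD all_cat H2 /= /gb.
by rewrite add0n HN //; case: decP.
Qed.

Lemma af_lt g : ltK al g -> forall a m, ltK (af a m).1 g.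
Proof.
move=> Hg a m; rewrite /af; case: ifP => [/allP H|_].
  have := H m; rewrite mem_iota /= add0n ltnSn => /(_ isT); rewrite /gb.
  by case: decP => // h _; exact: (ltK_trans Hwo h Hg).
by case: ifP => _ //=; exact: (ltK_trans Hwo Hzal Hg).
Qed.

Lemma red_cases a : (forall m, af a m = a m) \/
  exists n, (forall m, (m < n)%N -> af a m = a m) /\ ~ ltK (a n).1 al /\ (af a n).1 = al.
Proof.
case: (classic (exists k, ~~ gb a k)) => [H|H].
  right; have H0 : exists k, [pred k | ~~ gb a k] k by [].
  case: (ex_minnP H0) => n Hn Hmin; exists n.
  have Hall : forall m, (m <= n)%N -> all (gb a) (iota 0 m).
    move=> m Hm; apply/allP => k; rewrite mem_iota add0n /= => Hk.
    apply: contraT => /Hmin; rewrite leqNgt; move: (leq_trans Hk Hm) => ->; by [].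
  split; [|split].
  - by move=> m Hm; rewrite /af Hall.
  - by move=> h; move: Hn; rewrite /= /gb; move/decP: h => ->.
  - have Hn' : all (gb a) (iota 0 n.+1) = false.
      apply: negbTE; apply/allP => /(_ n); rewrite mem_iota add0n ltnSn => /(_ isT) E.
      by move: Hn; rewrite /= E.
    by rewrite /af Hn' Hall.
left=> m; rewrite /af; suff -> : all (gb a) (iota 0 m.+1) by [].
apply/allP => k _; apply: contraT => Hk; case: H; by exists k.
Qed.

Lemma transfer1 (x y b : nat -> K * rat) n : (forall m, (m < n)%N -> x m = y m) ->
  ~ ltK (x n).1 al -> ~ ltK (y n).1 al -> ltK (b n).1 al ->
  (ltf ltK x b -> ltf ltK y b) /\ (ltf ltK b x -> ltf ltK b y).
Proof.
move=> Hxy Hx Hy Hb; split.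
- case=> m [Hag Hlt]; case: (ltngtP m n) => Hmn.
  + exists m; split; last by rewrite -Hxy.
    by move=> k Hk; rewrite -Hxy ?Hag // (ltn_trans Hk Hmn).
  + by case: Hx; have := Hag n Hmn => ->.
  + subst m; case: Hlt => [h|[h _]]; case: Hx; first exact: (ltK_trans Hwo h Hb).
    by rewrite h.
- case=> m [Hag Hlt]; case: (ltngtP m n) => Hmn.
  + exists m; split; last by rewrite -Hxy.
    by move=> k Hk; rewrite -Hxy ?Hag // (ltn_trans Hk Hmn).
  + by case: Hx; have := Hag n Hmn => <-.
  + subst m; exists n; split; first by move=> k Hk; rewrite -Hxy ?Hag.
    left; case: (ltK_tri Hwo (b n).1 (y n).1) => [//|[E|h]].
      by case: Hy; rewrite -E.
    by case: Hy; exact: (ltK_trans Hwo h Hb).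
Qed.

Lemma red_rel (a b : nat -> K * rat) : (forall n, ltK (b n).1 al) ->
  (ltf ltK a b <-> ltf ltK (af a) b) /\ (ltf ltK b a <-> ltf ltK b (af a)) /\
  (a = b <-> af a = b).
Proof.
move=> Hb; case: (red_cases a) => [H|[n [H1 [H2 H3]]]].
  have -> : af a = a by apply: functional_extensionality.
  by [].
have H1' : forall m, (m < n)%N -> a m = af a m by move=> m /H1 ->.
have H3' : ~ ltK (af a n).1 al by rewrite H3; apply: (ltK_irr Hwo).
have [T1 T2] := transfer1 _ _ _ _ H1' H2 H3' (Hb n).
have [T3 T4] := transfer1 _ _ _ _ H1 H3' H2 (Hb n).
split; [tauto|split; [tauto|]].
split=> E; [case: H2|case: H3']; by rewrite E.
Qed.

End Red.

Lemma ltf_irr K (ltK : K -> K -> Prop) (Hwo : strict_wellorder ltK) f : ~ ltf ltK f f.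
Proof. case=> n [_ [h|[_ h]]]; [exact: (ltK_irr Hwo h)|by rewrite Order.POrderTheory.ltxx in h]. Qed.

Theorem mainTheorem14 (K : Type) (ltK : K -> K -> Prop) (z : K)
  (Hwo : strict_wellorder ltK)
  (Hz : forall x : K, ~ ltK x z)
  (Hinit : initial_ordinal ltK)
  (Hreg : regular ltK)
  (Hunc : uncountable K)
  (Hpow : small_powers ltK)
  (Homega : omega_powers_small ltK)
  (Hsucc : successor_cardinal ltK) :
  bs_stable K (@ltI0 K ltK z).
Proof.
move=> B [[e einj] HBn].
case: (@bound_img _ _ Hreg _ e HBn) => rho Hrho.
case: (@nomax _ _ Hreg Hunc rho) => d1 Hd1.
have HBn2 : ~ card_le K ({b : I0 z | B b} * nat).
  move=> HK.
  have H1 : card_le ({b : I0 z | B b} * nat) (nat -> seg ltK d1).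
    apply: card_le_trans (@code_inj _ _ Hwo _ _ Hd1).
    exists (fun p => (exist _ (e p.1) (Hrho p.1), p.2)) => [[x n] [y m]] E.
    case: E => /einj -> ->; by [].
  case: (Homega d1) => _ Hn; apply: Hn; exact: card_le_trans HK H1.
case: (@bound_img _ _ Hreg _ (fun p : {b : I0 z | B b} * nat => (sval (sval p.1) p.2).1) HBn2) => be Hbe.
case: (@nomax _ _ Hreg Hunc be) => al Hal.
have Hzal : ltK z al.
  by case: (@z_le _ _ z Hwo Hz be) => [<-|h] //; exact: (ltK_trans Hwo h Hal).
case: (@nomax _ _ Hreg Hunc al) => g Hg; case: (@nomax _ _ Hreg Hunc g) => d Hd.
have HBal : forall b, B b -> forall n, ltK (sval b n).1 al :=
  fun b Bb n => ltK_trans Hwo (Hbe (exist _ b Bb, n)) Hal.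
pose red (a : I0 z) : I0 z := exist _ (af K ltK z al (sval a)) (@af_supp _ _ z al Hzal a).
have tp_red : forall a, tp_bs (@ltI0 K ltK z) a B = tp_bs (@ltI0 K ltK z) (red a) B.
  move=> a; apply: tp_eq.
  - move=> b Bb; exact: (@red_rel _ _ z Hwo al (sval a) _ (HBal b Bb)).1.
  - move=> b Bb; exact: (@red_rel _ _ z Hwo al (sval a) _ (HBal b Bb)).2.1.
  - move=> b Bb; have [h1 h2] := (@red_rel _ _ z Hwo al (sval a) _ (HBal b Bb)).2.2.
    split=> E.
      by apply: sig_eq; apply: h1; rewrite E.
    by apply: sig_eq; apply: h2; rewrite -E.
  - split=> h; exfalso; exact: (@ltf_irr _ _ Hwo _ h).
pose code (a : I0 z) : nat -> seg ltK g * nat := fun m =>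
  (exist _ (af K ltK z al (sval a) m).1 (@af_lt _ _ z Hwo al Hzal g Hg _ m), pickle (af K ltK z al (sval a) m).2).
have code_red : forall a1 a2, code a1 = code a2 -> red a1 = red a2.
  move=> a1 a2 E; apply: sig_eq; apply: functional_extensionality => m /=.
  have := congr1 (fun h => h m) E; rewrite /code; case.
  move=> E1 /(pcan_inj (@pickleK _)) E2.
  by rewrite [LHS]surjective_pairing [RHS]surjective_pairing E1 E2.
pose Types := {P : blit (I0 z) -> Prop | exists a, P = tp_bs (@ltI0 K ltK z) a B}.
have Hsmall : card_le Types (nat -> seg ltK g * nat).
  pose pk (T : Types) : I0 z := proj1_sig (constructive_indefinite_description _ (proj2_sig T)).
  have pkE : forall T, proj1_sig T = tp_bs (@ltI0 K ltK z) (pk T) B :=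
    fun T => proj2_sig (constructive_indefinite_description _ (proj2_sig T)).
  exists (fun T => code (pk T)) => T1 T2 E; apply: sig_eq.
  by rewrite !pkE (tp_red (pk T1)) (tp_red (pk T2)) (code_red _ _ E).
have Hd2 : card_le (nat -> seg ltK g * nat) (nat -> seg ltK d) :=
  @card_le_trans _ _ _ (@map_nat_inj _ _ (@code_inj _ _ Hwo _ _ Hd)) (curry_inj _).
case: (Homega d) => Hle Hnle.
have Hc : card_le Types (nat -> seg ltK d) := @card_le_trans _ _ _ Hsmall Hd2.
split; first exact: (@card_le_trans _ _ _ Hc Hle).
move=> HK; apply: Hnle; exact: (@card_le_trans _ _ _ HK Hc).
Qed.
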